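(* Let $(c,d),(e,f)\in\mathcal{B}$ with $d$ and $f$ odd and $d\neq f$. Then $U=\{(0,0),(c,d),(e,f)\}\subseteq\mathcal{B}$ is unavoidable.
   Context: The bicyclic inverse semigroup is $\mathcal{B}=\{(a,b)\in\mathbb{Z}\times\mathbb{Z}\mid a\ge 0,\ a+b\ge 0\}$ with multiplication $(a,b)(c,d)=(\max\{c+d,a\}-d,\ b+d)$. A subset $U\subseteq\mathcal{B}$ is called avoidable if $\mathcal{B}$ can be partitioned into two subsets $A$ and $B$ such that no element of $U$ can be written as a product $xy$ of two distinct elements $x\neq y$ both in $A$, or both in $B$. A set is unavoidable if it is not avoidable. *)

(* Defs.v *)
From Stdlib Require Import ZArith.
Open Scope Z_scope.

(* Elements of the bicyclic inverse semigroup B are pairs (a,b) of integers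
   with a >= 0 and a + b >= 0. *)
Definition inB (x : Z * Z) : Prop := 0 <= fst x /\ 0 <= fst x + snd x.

Definition bmul (x y : Z * Z) : Z * Z :=
  let (a, b) := x in let (c, d) := y in (Z.max (c + d) a - d, b + d).

(* A partition of B into two subsets A and B is encoded by a colouring
   col : Z*Z -> bool (A = elements of B coloured true, B = coloured false);
   only its values on B matter. *)
Definition avoidable (U : Z * Z -> Prop) : Prop :=
  exists col : Z * Z -> bool,
    forall x y : Z * Z, inB x -> inB y -> x <> y -> col x = col y ->
      ~ U (bmul x y).

Definition unavoidable (U : Z * Z -> Prop) : Prop := ~ avoidable U.

(* Main.v *)
Require Import Defs.
From Stdlib Require Import ZArith Lia.
Open Scope Z_scope.

Lemma edge (U : Z * Z -> Prop) (col : Z * Z -> bool)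
  (H : forall x y : Z * Z, inB x -> inB y -> x <> y -> col x = col y -> ~ U (bmul x y))
  x y : inB x -> inB y -> x <> y -> U (bmul x y) -> col x <> col y.
Proof. intros Hx Hy Hxy Hu Hc. exact (H x y Hx Hy Hxy Hc Hu). Qed.

Ltac pairne := let E := fresh in intro E; injection E; lia.
Ltac inb := unfold inB; simpl; lia.
Ltac prod := unfold bmul; f_equal; lia.

Lemma main_lemma (c d e f k m : Z) (col : Z * Z -> bool) :
  inB (c, d) -> inB (e, f) -> d = f + 2 * k -> 1 <= k -> f = 2 * m + 1 ->
  (forall x y : Z * Z, inB x -> inB y -> x <> y -> col x = col y ->
     ~ ((bmul x y) = (0, 0) \/ (bmul x y) = (c, d) \/ (bmul x y) = (e, f))) ->
  False.
Proof.
  intros [H1 H2] [H3 H4] Hd Hk Hf H. simpl in H1, H2, H3, H4.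
  set (b0 := f + k).
  set (U := fun u : Z*Z => u = (0, 0) \/ u = (c, d) \/ u = (e, f)).
  pose proof (edge U col H) as E.
  assert (E1 : col (k, -k) <> col (0, k)).
  { apply E; [inb|inb|pairne|]. left; prod. }
  assert (E2 : col (c + k, b0) <> col (0, k)).
  { apply E. unfold b0; inb. inb. unfold b0; pairne. right; left. unfold b0; prod. }
  assert (E4 : col (k, -k) <> col (e, b0)).
  { apply E; [inb|unfold b0; inb|unfold b0; pairne|]. right; right. unfold b0; prod. }
  destruct (Z_le_gt_dec e (c + k)) as [Hc|Hc].
  - assert (E3 : col (c + k, b0) <> col (c, k)).
    { apply E; [unfold b0; inb|inb|pairne|]. right; left. unfold b0; prod. }
    assert (E5 : col (e, b0) <> col (c, k)).
    { apply E. unfold b0; inb. inb. unfold b0; pairne. right; left. unfold b0; prod. }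
    destruct (col (k, -k)), (col (0, k)), (col (c + k, b0)), (col (c, k)), (col (e, b0));
      congruence.
  - assert (E3 : col (e + b0, -k) <> col (c + k, b0)).
    { apply E; [unfold b0; inb|unfold b0; inb|unfold b0; pairne|]. right; right. unfold b0; prod. }
    assert (E5 : col (e + b0, -k) <> col (e, b0)).
    { apply E; [unfold b0; inb|unfold b0; inb|unfold b0; pairne|]. right; right. unfold b0; prod. }
    destruct (col (k, -k)), (col (0, k)), (col (c + k, b0)), (col (e + b0, -k)), (col (e, b0));
      congruence.
Qed.

Theorem proposition6p1 (c d e f : Z) :
  inB (c, d) -> inB (e, f) ->
  Z.odd d = true -> Z.odd f = true -> d <> f ->
  unavoidable (fun u => u = (0, 0) \/ u = (c, d) \/ u = (e, f)).
Proof.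
  intros Hcd Hef Hd Hf Hne [col H].
  destruct (proj1 (Z.odd_spec d) Hd) as [m1 Hm1].
  destruct (proj1 (Z.odd_spec f) Hf) as [m2 Hm2].
  destruct (Z_lt_ge_dec f d) as [Hlt|Hgt].
  - apply (main_lemma c d e f (m1 - m2) m2 col); auto; try lia.
  - apply (main_lemma e f c d (m2 - m1) m1 col); auto; try lia.
    intros x y Hx Hy Hxy Hc Hu. apply (H x y Hx Hy Hxy Hc). tauto.
Qed.
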